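(* Let $n$ be an even positive integer and $\ell\ge 2$ an integer. Then $\max(n,\ell)=\binom{n}{2}-\frac{n}{2}$ if and only if $\gcd(n-1,\ell)=1$. Moreover, if $n$ is even and $\gcd(n-1,\ell)=1$, then $\overline{M_n}$ is (up to isomorphism) the unique $N$-AW graph of maximum size on $n$ vertices.
   Context: All graphs are finite and simple; $\overline{G}$ is the complement of $G$. Vertex labels lie in $\mathbb{Z}_\ell$. In the neighborhood Lights Out game on $G$, toggling a vertex $v$ adds $1$ (mod $\ell$) to the label of each vertex of the closed neighborhood $N[v]$; the game is won when all labels are $0$. $G$ is $N$-AW if the game can be won from every initial labeling $V(G)\to\mathbb{Z}_\ell$. $\max(n,\ell)$ is the maximum number of edges of an $N$-AW graph on $n$ vertices. For even $n$, $M_n$ denotes a perfect matching on $n$ vertices. *)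

(* Defs.v *)
From mathcomp Require Import all_boot all_algebra all_fingroup.
Set Implicit Arguments. Unset Strict Implicit. Unset Printing Implicit Defensive.
Import GRing.Theory.
Local Open Scope ring_scope.

Definition simple_graph (n : nat) (e : rel 'I_n) : Prop :=
  irreflexive e /\ symmetric e.

Definition nedges (n : nat) (e : rel 'I_n) : nat :=
  #|[set p : 'I_n * 'I_n | e p.1 p.2 && (p.1 < p.2)%N]|.

(* Neighborhood Lights Out over Z_l: toggling u (t u times) adds t u to every
   vertex of N[u].  G is N-AW if every initial labeling can be turned into 0. *)
Definition N_AW (l n : nat) (e : rel 'I_n) : Prop :=
  forall init : 'I_n -> 'Z_l,
    exists t : 'I_n -> nat,
      forall v : 'I_n,
        init v + \sum_(u : 'I_n | (u == v) || e u v) (t u)%:R = 0.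

Definition is_maxAW (n l m : nat) : Prop :=
  (exists e : rel 'I_n, [/\ simple_graph e, N_AW l e & nedges e = m]) /\
  (forall e : rel 'I_n, simple_graph e -> N_AW l e -> (nedges e <= m)%N).

(* The perfect matching M_n pairing 2k with 2k+1 and its complement. *)
Definition matching_rel (n : nat) : rel 'I_n :=
  fun i j => (i != j) && ((i : nat)./2 == (j : nat)./2).
Definition compl_rel (n : nat) (e : rel 'I_n) : rel 'I_n :=
  fun i j => (i != j) && ~~ e i j.

Definition graph_iso (n : nat) (e e' : rel 'I_n) : Prop :=
  exists f : {perm 'I_n}, forall u v, e u v = e' (f u) (f v).
Arguments matching_rel n : clear implicits.

(* Main.v *)
Require Import Defs.
From mathcomp Require Import all_boot all_algebra all_fingroup.
From mathcomp Require Import zify ring.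
Set Implicit Arguments. Unset Strict Implicit. Unset Printing Implicit Defensive.
Import GRing.Theory.

Definition Dc (n : nat) (r : rel 'I_n) : nat := #|[set p : 'I_n * 'I_n | r p.1 p.2]|.
Definition deg (n : nat) (r : rel 'I_n) (v : 'I_n) : nat := #|[set w | r v w]|.

Lemma card_sum (T : finType) (P : pred T) : #|[set x | P x]| = \sum_x (P x : nat).
Proof.
rewrite -sum1_card big_mkcond /=; apply: eq_bigr => x _; rewrite inE; by case: (P x).
Qed.

Lemma Dc_sum n (r : rel 'I_n) : Dc r = \sum_v deg r v.
Proof.
rewrite /Dc card_sum -(pair_bigA _ (fun a b => (r a b : nat))) /=; apply: eq_bigr => v _; by rewrite /deg card_sum.
Qed.

Lemma Dc_edges n (r : rel 'I_n) : irreflexive r -> symmetric r -> Dc r = 2 * nedges r.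
Proof.
move=> irr sym; rewrite /Dc /nedges.
set A := [set p : 'I_n * 'I_n | r p.1 p.2].
set B := [set p : 'I_n * 'I_n | r p.1 p.2 && (p.1 < p.2)%N].
have -> : A = B :|: ((fun p : 'I_n * 'I_n => (p.2, p.1)) @^-1: B).
  apply/setP => [[x y]]; rewrite !inE /= (sym y x).
  case: (ltngtP x y) => [_|_|/val_inj ->]; rewrite ?andbT ?andbF ?orbF //.
rewrite cardsU card_preimset; last by move=> [a b] [c d] [-> ->].
have -> : B :&: ((fun p : 'I_n * 'I_n => (p.2, p.1)) @^-1: B) = set0.
  apply/setP => [[x y]]; rewrite !inE /=. case: (r x y); case: (r y x) => //=; rewrite ?andbF //.
  by case: ltngtP.
by rewrite cards0 subn0 addnn -mul2n.
Qed.

Lemma deg_compl n (e : rel 'I_n) v : irreflexive e ->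
  deg e v + deg (compl_rel e) v = n.-1.
Proof.
move=> irr; have := cardsID [set w | e v w] [set~ v]; rewrite cardsC1 card_ord => <-.
rewrite /deg; congr (_ + _); apply: eq_card => w; rewrite !inE /compl_rel.
- case: (eqVneq w v) => [->|]; by rewrite ?irr ?andbF.
- by rewrite andbC eq_sym.
Qed.

Lemma Dc_compl n (e : rel 'I_n) : irreflexive e ->
  Dc e + Dc (compl_rel e) = n * n.-1.
Proof.
move=> irr; rewrite !Dc_sum -big_split /=.
rewrite (eq_bigr (fun _ => n.-1)); last by move=> v _; apply: deg_compl.
by rewrite sum_nat_const card_ord.
Qed.

Lemma bin2_2 n : ~~ odd n -> 2 * 'C(n, 2) = n * n.-1.
Proof.
move=> ev; rewrite bin2; have hn : n = (n./2).*2 by rewrite -{1}(odd_double_half n) (negbTE ev).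
have -> : n * n.-1 = (n./2 * n.-1).*2 by rewrite -mul2n mulnA mul2n -hn.
by rewrite doubleK mul2n.
Qed.

Lemma twins_not_AW n l (e : rel 'I_n) : N_AW l e ->
  forall u w, u != w -> (forall x, compl_rel e x u = compl_rel e x w) -> False.
Proof.
move=> aw u w uw H.
have [t ht] := aw (fun v => if v == u then 1%R else 0%R).
have h1 := ht u; have h2 := ht w.
rewrite eqxx in h1; rewrite eq_sym (negbTE uw) add0r in h2.
have E : (\sum_(x | (x == u) || e x u) (t x)%:R = \sum_(x | (x == w) || e x w) (t x)%:R :> 'Z_l)%R.
  apply: eq_bigl => x; have := congr1 negb (H x); by rewrite /compl_rel !negb_and !negbK.
rewrite E h2 GRing.addr0 in h1.
by have := @GRing.oner_neq0 'Z_l; rewrite h1 eqxx.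
Qed.

Lemma compl_simple n (e : rel 'I_n) : simple_graph e -> simple_graph (compl_rel e).
Proof.
move=> [irr sym]; split; first by move=> x; rewrite /compl_rel eqxx.
by move=> x y; rewrite /compl_rel eq_sym sym.
Qed.

Lemma sum_ones n : \sum_(v < n) 1 = n.
Proof. by rewrite sum1_card card_ord. Qed.

Lemma sum_eqz n (z : 'I_n) : \sum_(v < n) (v == z : nat) = 1.
Proof.
rewrite -card_sum; suff -> : [set v | v == z] = [set z] by rewrite cards1.
by apply/setP => v; rewrite !inE.
Qed.

Lemma core n l (e : rel 'I_n) : ~~ odd n -> simple_graph e -> N_AW l e ->
  let c := compl_rel e in
  (n <= \sum_v deg c v)%N /\ ((\sum_v deg c v = n) -> forall v, deg c v = 1%N).
Proof.
move=> ev sg aw c.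
have [irr sym] : simple_graph c := compl_simple sg.
have ev2 : exists k, \sum_v deg c v = 2 * k by exists (nedges c); rewrite -Dc_sum Dc_edges.
have evn : exists m, n = 2 * m by exists n./2; rewrite -{1}(odd_double_half n) (negbTE ev) -mul2n.
have T0 : forall u w, u != w -> deg c u = 0%N -> deg c w = 0%N -> False.
  move=> u w uw du dw; apply: (twins_not_AW aw uw) => x.
  have fu : c u x = false.
    apply/negP => h; suff : x \in (set0 : {set 'I_n}) by rewrite inE.
    by move: du => /eqP; rewrite cards_eq0 => /eqP <-; rewrite inE.
  have fw : c w x = false.
    apply/negP => h; suff : x \in (set0 : {set 'I_n}) by rewrite inE.
    by move: dw => /eqP; rewrite cards_eq0 => /eqP <-; rewrite inE.
  by change (c x u = c x w); rewrite (sym x u) (sym x w) fu fw.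
have T1 : forall a a' b, a != a' -> (deg c a <= 1)%N -> (deg c a' <= 1)%N -> c a b -> c a' b -> False.
  move=> a a' b aa' da da' cab ca'b; apply: (twins_not_AW aw aa') => x.
  change (c x a = c x a'); rewrite (sym x a) (sym x a').
  have /card_le1P Ha := da; have /card_le1P Ha' := da'.
  have bA : b \in [set w | c a w] by rewrite inE.
  have bA' : b \in [set w | c a' w] by rewrite inE.
  have := Ha b bA x; have := Ha' b bA' x; rewrite !inE => -> -> //.
case: (pickP (fun z => deg c z == 0%N)) => [z /eqP dz | H0].
- have Hs : (\sum_v deg c v + 1 = n + \sum_v (deg c v).-1)%N.
    have -> : (n + \sum_v (deg c v).-1 = \sum_v (1 + (deg c v).-1))%N by rewrite big_split sum_ones.
    rewrite -[in LHS](sum_eqz z) -big_split /=.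
    apply: eq_bigr => v _; case: (eqVneq v z) => [->|vz]; first by rewrite dz.
    case: (posnP (deg c v)) => [dv|]; first by case: (T0 _ _ vz dv dz).
    by move=> dv; rewrite addn0 add1n prednK.
  case: (posnP (\sum_v (deg c v).-1)) => [s0|spos].
    by exfalso; case: ev2 => k hk; case: evn => m hm; rewrite s0 in Hs; lia.
  split; first lia.
  move=> HS; have s1 : (\sum_v (deg c v).-1 = 1)%N by lia.
  have := sum_nat_eq0 predT (fun v => (deg c v).-1); rewrite s1 /=.
  move=> /esym /negbT /forallPn [b] /= db.
  move: s1; rewrite (bigD1 b) //= => s1.
  have [k dk] : exists k, (deg c b).-1 = k.+1 by move: db; case: ((deg c b).-1) => // k _; exists k.
  move: s1; rewrite dk addSn => -[] /eqP; rewrite addn_eq0 sum_nat_eq0 => /andP [_ rest].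
  have le1 : forall v, v != b -> (deg c v <= 1)%N.
    by move=> v vb; have := forallP rest v; rewrite vb /= => /eqP; lia.
  have : (1 < deg c b)%N by move: db; lia.
  case/card_gt1P => a [a' [aA a'A aa']]; rewrite !inE in aA a'A.
  exfalso; apply: (T1 a a' b aa') => //; rewrite ?(sym a) ?(sym a') //.
  + apply: le1; apply: contraTneq aA => ->; by rewrite irr.
  + apply: le1; apply: contraTneq a'A => ->; by rewrite irr.
- have Hs : (\sum_v deg c v = n + \sum_v (deg c v).-1)%N.
    have -> : (n + \sum_v (deg c v).-1 = \sum_v (1 + (deg c v).-1))%N by rewrite big_split sum_ones.
    apply: eq_bigr => v _.
    have := H0 v; rewrite /= => /negbT; rewrite -lt0n => dv.
    by rewrite add1n prednK.
  split; first lia.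
  move=> HS; have s0 : (\sum_v (deg c v).-1 == 0)%N by apply/eqP; lia.
  move=> v; move: s0; rewrite sum_nat_eq0 => /forallP /(_ v) /eqP.
  have := H0 v; rewrite /= => /negbT; rewrite -lt0n; lia.
Qed.

Definition pt n (c : rel 'I_n) (v : 'I_n) : 'I_n := odflt v [pick w | c v w].

Lemma pt_spec n (c : rel 'I_n) v : deg c v = 1%N -> forall w, c v w = (w == pt c v).
Proof.
move=> /eqP /cards1P [x hx].
have cx : forall w, c v w = (w == x).
  by move=> w; move/setP: hx => hx; have := hx w; rewrite !inE.
rewrite /pt; case: pickP => [w hw | none] /=; last by have := none x; rewrite cx eqxx.
by move: hw; rewrite cx => /eqP ->.
Qed.

Lemma pt_invol n (c : rel 'I_n) : symmetric c -> (forall v, deg c v = 1%N) ->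
  forall v, pt c (pt c v) = v.
Proof.
move=> sym d1 v; have h1 := pt_spec (d1 v) (pt c v); rewrite eqxx in h1.
have := pt_spec (d1 (pt c v)) v; rewrite sym h1 => /esym /eqP //.
Qed.

Lemma closed_nb n (e : rel 'I_n) u v : ((u == v) || e u v) = ~~ compl_rel e u v.
Proof. by rewrite /compl_rel negb_and !negbK. Qed.

Local Open Scope ring_scope.

Lemma aw_coprime n l (e : rel 'I_n) : (0 < n)%N -> (2 <= l)%N -> simple_graph e ->
  (forall v, deg (compl_rel e) v = 1%N) -> N_AW l e -> coprime n.-1 l.
Proof.
move=> n0 l2 sg d1 aw.
have [t ht] := aw (fun v => if v == Ordinal n0 then 1%R else 0%R).
have E : (\sum_v ((if v == Ordinal n0 then 1 else 0) + \sum_(u | (u == v) || e u v) (t u)%:R) = 0 :> 'Z_l)%R.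
  by rewrite big1 // => v _; exact: ht.
rewrite big_split /= -big_mkcond big_pred1_eq in E.
rewrite (exchange_big_dep xpredT) //= in E.
have inner : forall u : 'I_n, (\sum_(v | true && ((u == v) || e u v)) (t u)%:R = (t u)%:R *+ n.-1 :> 'Z_l)%R.
  move=> u; rewrite (eq_bigl (fun v => v \in [predC [set w | compl_rel e u w]])); last first.
    by move=> v; rewrite /= closed_nb !inE.
  rewrite sumr_const; congr (_ *+ _).
  have := cardC [set w | compl_rel e u w]; rewrite -/(deg _ u) d1 add1n card_ord => h.
  by move/(congr1 predn): h.
rewrite (eq_bigr _ (fun u _ => inner u)) sumrMnl -natr_sum -mulrnA addrC natr1 in E.
have := congr1 val E; rewrite Zp_nat /= Zp_cast // => /eqP hdiv.
rewrite /coprime; set g := gcdn n.-1 l.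
have : (g %| ((\sum_i t i) * n.-1).+1)%N.
  by apply: (dvdn_trans (dvdn_gcdr n.-1 l)); rewrite /dvdn hdiv.
by rewrite -addn1 dvdn_addr ?dvdn1 // dvdn_mull // dvdn_gcdl.
Qed.

Lemma coprime_aw n l (e : rel 'I_n) : (0 < n)%N -> (2 <= l)%N -> simple_graph e ->
  (forall v, deg (compl_rel e) v = 1%N) -> coprime n.-1 l -> N_AW l e.
Proof.
move=> n0 l2 sg d1 cop init.
have [_ sym] := compl_simple sg.
set c := compl_rel e in d1 sym.
set p := pt c.
have pp : forall v, p (p v) = v := pt_invol sym d1.
have pinj : injective p by move=> x y h; rewrite -(pp x) h pp.
have cp : forall u v, c u v = (u == p v) by move=> u v; rewrite sym; apply: pt_spec.
set b := fun v => - init v.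
set B := \sum_v b v.
have unit : ((n.-1)%:R : 'Z_l) \is a GRing.unit by rewrite unitZpE // coprime_sym.
set s := B / (n.-1)%:R.
set tz := fun w => s - b (p w).
exists (fun w => val (tz w)) => v.
have nz : forall x : 'Z_l, ((val x)%:R : 'Z_l) = x by move=> x; exact: natr_Zp.
rewrite (eq_bigr (fun u => tz u)); last by move=> u _; apply: nz.
have tot : \sum_u tz u = \sum_(u | c u v) tz u + \sum_(u | (u == v) || e u v) tz u.
  rewrite (bigID (fun u => c u v)) /=; congr (_ + _).
  by apply: eq_bigl => u; rewrite closed_nb.
have one : \sum_(u | c u v) tz u = tz (p v) by apply: big_pred1 => u; rewrite /= cp.
have all : \sum_u tz u = s *+ n - B.
  rewrite sumrB sumr_const card_ord; congr (_ - _).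
  by rewrite /B (reindex_inj pinj); apply: eq_bigr => j _; rewrite pp.
have E : \sum_(u | (u == v) || e u v) tz u = s *+ n - B - tz (p v).
  by rewrite -all tot one addrC addKr.
rewrite E /tz pp /b.
have sB : s * (n.-1)%:R = B by rewrite /s divrK.
rewrite -sB.
have -> : s *+ n = s * (n.-1)%:R + s by rewrite -{1}(prednK n0) mulrSr mulr_natr.
by rewrite opprB; ring.
Qed.

Lemma half_partner (v w : nat) :
  ((v != w) && (v./2 == w./2)) = (w == if odd v then v.-1 else v.+1).
Proof.
have hv := odd_double_half v; have hw := odd_double_half w.
move: hv hw; case: (odd v); case: (odd w) => /= hv hw.
all: apply/idP/idP; lia.
Qed.

Lemma M_simple n : simple_graph (compl_rel (matching_rel n)).
Proof.
apply: compl_simple; split; first by move=> x; rewrite /matching_rel eqxx.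
by move=> x y; rewrite /matching_rel eq_sym; congr (_ && _); rewrite eq_sym.
Qed.

Lemma M_deg n : ~~ odd n -> forall v, deg (compl_rel (compl_rel (matching_rel n))) v = 1%N.
Proof.
move=> ev v.
have hq : ((if odd v then (v : nat).-1 else (v : nat).+1) < n)%N.
  case ov: (odd v); first by have := ltn_ord v; lia.
  have := ltn_ord v; rewrite leq_eqVlt => /orP [/eqP h|] //.
  have : odd n by rewrite -h /= ov.
  by rewrite (negbTE ev).
apply/eqP/cards1P; exists (Ordinal hq); apply/setP => w; rewrite !inE.
rewrite /compl_rel negb_and !negbK.
have -> : ((v != w) && ((v == w) || matching_rel n v w)) = matching_rel n v w.
  by rewrite /matching_rel; case: (v =P w).
by rewrite /matching_rel -val_eqE /= half_partner.
Qed.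

Lemma iso_pm n (e : rel 'I_n) : simple_graph e ->
  (forall v, deg (compl_rel e) v = 1%N) -> graph_iso e (compl_rel (matching_rel n)).
Proof.
move=> sg d1.
have [irrc sym] := compl_simple sg.
have [irre syme] := sg.
set c := compl_rel e in d1 sym irrc.
set p := pt c.
have pp : forall v, p (p v) = v := pt_invol sym d1.
have pinj : injective p by move=> x y h; rewrite -(pp x) h pp.
have cp : forall u v, c u v = (u == p v) by move=> u v; rewrite sym; apply: pt_spec.
have pne : forall v, p v != v.
  by move=> v; apply/negP => /eqP h; have := cp (p v) v; rewrite {1}h irrc eqxx.
set R := [set v : 'I_n | (v < p v)%N].
have pR : forall v, (p v \in R) = (v \notin R).
  move=> v; rewrite !inE pp; have := pne v; rewrite -val_eqE /=; lia.
set rep := fun v => if v \in R then v else p v.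
have repR : forall v, rep v \in R.
  by move=> v; rewrite /rep; case: ifP => // /negbT; rewrite -pR.
have repE : forall u v, (rep u == rep v) = (u == v) || (u == p v).
  move=> u v; rewrite /rep.
  case uR: (u \in R); case vR: (v \in R).
  - case: (eqVneq u v) => //= _.
    by apply/esym/negbTE/negP => /eqP hu; move: uR; rewrite hu pR vR.
  - case: (eqVneq u v) => [huv|_] /=; first by rewrite huv vR in uR.
    by [].
  - case: (eqVneq u v) => [huv|_] /=; first by rewrite huv vR in uR.
    apply/eqP/eqP => [<-|->]; by rewrite pp.
  - rewrite (inj_eq pinj); case: (eqVneq u v) => //= _.
    by apply/esym/negbTE/negP => /eqP hu; move: uR; rewrite hu pR vR.
have cardR : (#|R| + #|R| <= n)%N.
  have sub : p @: R \subset ~: R.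
    apply/subsetP => x /imsetP [y yR ->]; by rewrite inE pR yR.
  have := subset_leq_card sub; rewrite card_imset // => h.
  have := cardsC R; rewrite card_ord => hc; rewrite -[X in (_ <= X)%N]hc; by rewrite leq_add2l.
set rk := fun v => index (rep v) (enum R).
have rkb : forall v, (rk v < #|R|)%N by move=> v; rewrite cardE index_mem mem_enum.
have rkE : forall u v, (rk u == rk v) = (rep u == rep v).
  move=> u v; rewrite /rk; apply/eqP/eqP => [h|->] //.
  have hu : rep u \in enum R by rewrite mem_enum.
  have hv : rep v \in enum R by rewrite mem_enum.
  by rewrite -(nth_index u hu) -(nth_index u hv); congr nth.
set f := fun v => (2 * rk v + (v \notin R))%N.
have fb : forall v, (f v < n)%N by move=> v; have := rkb v; have := cardR; rewrite /f; case: (v \in R) => /=; lia.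
set fo := fun v => Ordinal (fb v).
have foE : forall u v, (fo u == fo v) = (u == v).
  move=> u v; rewrite -val_eqE /= /f.
  apply/idP/idP => [h|/eqP -> //].
  have [hr hm] : rk u = rk v /\ (u \notin R) = (v \notin R).
    by move: h; case: (u \in R); case: (v \in R) => /=; split; lia.
  have := repE u v; rewrite -rkE hr eqxx => /esym /orP [//|/eqP hup].
  by move: hm; rewrite hup pR; case: (v \in R).
have finj : injective fo by move=> x y /eqP; rewrite foE => /eqP.
exists (perm finj) => u v; rewrite !permE.
rewrite /compl_rel /matching_rel foE.
have -> : (((fo u) : nat)./2 == ((fo v) : nat)./2) = (rep u == rep v).
  by rewrite -rkE /= /f; apply/eqP/eqP; lia.
rewrite repE; case: (eqVneq u v) => [->|uv] /=; first by rewrite irre.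
have := cp u v; rewrite /c /compl_rel uv /= => /(congr1 negb); rewrite negbK => <-.
by [].
Qed.

Local Close Scope ring_scope.

Theorem proposition4p3 (n l : nat) :
  (0 < n)%N -> ~~ odd n -> (2 <= l)%N ->
  (is_maxAW n l ('C(n, 2) - n./2) <-> coprime n.-1 l) /\
  (coprime n.-1 l ->
     N_AW l (compl_rel (matching_rel n)) /\
     forall e : rel 'I_n, simple_graph e -> N_AW l e ->
       nedges e = ('C(n, 2) - n./2)%N ->
       graph_iso e (compl_rel (matching_rel n))).
Proof.
move=> n0 ev l2.
have cnt : forall e : rel 'I_n, simple_graph e ->
    2 * nedges e + \sum_v deg (compl_rel e) v = 2 * 'C(n, 2).
  move=> e [irr sym]; rewrite bin2_2 // -Dc_edges // -Dc_sum; exact: Dc_compl irr.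
have hn : n = 2 * n./2 by rewrite -{1}(odd_double_half n) (negbTE ev) -mul2n.
have ub : forall e : rel 'I_n, simple_graph e -> N_AW l e -> nedges e <= 'C(n, 2) - n./2.
  move=> e sg aw; have [h _] := core ev sg aw; have := cnt e sg; lia.
have eq1 : forall e : rel 'I_n, simple_graph e -> N_AW l e -> nedges e = 'C(n, 2) - n./2 ->
    forall v, deg (compl_rel e) v = 1.
  move=> e sg aw ne; have [h1 h2] := core ev sg aw; apply: h2.
  have := cnt e sg; lia.
set e0 := compl_rel (matching_rel n).
have sg0 : simple_graph e0 := M_simple n.
have d0 : forall v, deg (compl_rel e0) v = 1 := M_deg ev.
have ne0 : nedges e0 = 'C(n, 2) - n./2.
  have := cnt e0 sg0; rewrite (eq_bigr (fun _ => 1)) // sum_ones; lia.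
split; first split.
- case=> [[e [sg aw ne]] _]; exact: aw_coprime n0 l2 sg (eq1 e sg aw ne) aw.
- move=> cop; split; last exact: ub.
  exists e0; split => //; exact: coprime_aw n0 l2 sg0 d0 cop.
move=> cop; split; first exact: coprime_aw n0 l2 sg0 d0 cop.
move=> e sg aw ne; exact: iso_pm sg (eq1 e sg aw ne).
Qed.
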